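(* Let $(\mathcal U,\mathcal F)$ be a strongly accessible set system satisfying the commutable property, let $S$ be a nonempty maximal solution with layered canonical order $s_1,\dots,s_{|S|}$, and let $1\le j\le |S|$. Then $T=\mathrm{complete}'(S[j],\mathcal U)$ is a maximal solution and $T\preceq' S$.
   Context: A set system is $(\mathcal U,\mathcal F)$ with $\mathcal U$ finite, $\mathcal F\subseteq 2^{\mathcal U}$, $\emptyset\in\mathcal F$; $S\in\mathcal F$ is maximal if no $Y\in\mathcal F$ has $S\subsetneq Y$. Strongly accessible: for all $X,Y\in\mathcal F$ with $X\subsetneq Y$ there is $z\in Y\setminus X$ with $X\cup\{z\}\in\mathcal F$. Commutable property: for all $X,Y\in\mathcal F$ with $X\ne\emptyset$, $X\subsetneq Y$, and $a,b\in Y\setminus X$, if $X\cup\{a\},X\cup\{b\}\in\mathcal F$ then $X\cup\{a,b\}\in\mathcal F$. Elements of $\mathcal U$ are distinct integers. For $X,A\subseteq\mathcal U$, $X^+_A=\{a\in A\setminus X: X\cup\{a\}\in\mathcal F\}$ and $X^+=X^+_{\mathcal U}$. $Z=\{x:\{x\}\in\mathcal F\}$, $\mathrm{source}(X)=\min(X\cap Z)$. Layers: for $X\in\mathcal F$ and $t\in X\cap Z$, set $B_0=\{t\}$ and $B_i=B_{i-1}\cup(B_{i-1}^+\cap X)$ for $i>0$; for $y\in X\cup X^+$ define $\mathrm{lay}^X_t(t)=0$ and, for $y\neq t$, $\mathrm{lay}^X_t(y)=\min\{i\ge1: y\in B_{i-1}^+\}$; write $\mathrm{lay}^X=\mathrm{lay}^X_{\mathrm{source}(X)}$.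 For nonempty $X\in\mathcal F$ and $A\subseteq\mathcal U$ with $X^+_A\ne\emptyset$, $\mathrm{choose}'(X,A)$ is the $y\in X^+_A$ minimizing the pair $(\mathrm{lay}^X(y),y)$ lexicographically. $\mathrm{complete}'(X,A)$: while $X^+_A\neq\emptyset$ replace $X$ by $X\cup\{\mathrm{choose}'(X,A)\}$; return $X$. The layered canonical order of a nonempty maximal $S$ is $s_1=\mathrm{source}(S)$, $s_{i+1}=\mathrm{choose}'(S[i],S)$ while $S[i]^+_S\ne\emptyset$, where $S[i]=\{s_1,\dots,s_i\}$. For maximal $S\neq T$ with layered canonical orders $(s_i),(t_i)$, let $j$ be the smallest index where the pairs $(\mathrm{lay}^S_{s_1}(s_j),s_j)$ and $(\mathrm{lay}^T_{t_1}(t_j),t_j)$ differ; $S\prec' T$ iff the former pair is lexicographically smaller; $S\preceq' T$ iff $S\prec'T$ or $S=T$. *)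

(* Defs.v *)
From HB Require Import structures.
From mathcomp Require Import all_boot all_order all_algebra.
Set Implicit Arguments. Unset Strict Implicit. Unset Printing Implicit Defensive.
Import Order.TTheory GRing.Theory Num.Theory.

(* The ground set U is the whole finite type T; the elements of U are
   "distinct integers" via an injective labelling lab : T -> int.
   A family F : {set {set T}} is the set system. *)

Section SetSystems.
Variables (T : finType) (lab : T -> int) (F : {set {set T}}).

Definition maximal (S : {set T}) : Prop :=
  S \in F /\ forall Y, Y \in F -> ~ (S \proper Y).

Definition strongly_accessible : Prop :=
  forall X Y, X \in F -> Y \in F -> X \proper Y ->
    exists z, z \in Y :\: X /\ X :|: [set z] \in F.

Definition commutable : Prop :=
  forall X Y, X \in F -> Y \in F -> X != set0 -> X \proper Y ->
    forall a b, a \in Y :\: X -> b \in Y :\: X ->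
      X :|: [set a] \in F -> X :|: [set b] \in F -> X :|: [set a; b] \in F.

Definition plusA (X A : {set T}) : {set T} :=
  [set a in A :\: X | X :|: [set a] \in F].

Definition Zset : {set T} := [set x | [set x] \in F].

Definition source (X : {set T}) : option T :=
  [pick x in X :&: Zset | [forall y in X :&: Zset, (lab x <= lab y)%R]].

Definition layer (X : {set T}) (t : T) (i : nat) : {set T} :=
  iter i (fun B => B :|: (plusA B setT :&: X)) [set t].

(* lay^X_t(y): 0 if y = t, otherwise min{ i >= 1 : y \in B_{i-1}^+ }.
   The B_i are increasing and contained in X ∪ {t}, hence constant for
   i >= #|T|; so it suffices to search i-1 in [0, #|T|].  If no such i
   exists the value is #|T|.+2 (an "infinite" layer). *)
Definition lay (X : {set T}) (t y : T) : nat :=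
  if y == t then 0%N
  else (find (fun i => y \in plusA (layer X t i) setT) (iota 0 #|T|.+1)).+1.

Definition layX (X : {set T}) (y : T) : nat :=
  match source X with Some t => lay X t y | None => 0%N end.

Definition pair_le (p q : nat * int) : bool :=
  (p.1 < q.1)%N || ((p.1 == q.1) && (p.2 <= q.2)%R).
Definition pair_lt (p q : nat * int) : bool :=
  (p.1 < q.1)%N || ((p.1 == q.1) && (p.2 < q.2)%R).

Definition choose' (X A : {set T}) : option T :=
  [pick y in plusA X A |
     [forall z in plusA X A, pair_le (layX X y, lab y) (layX X z, lab z)]].

(* complete'(X, A): each step adds a new element, so #|T| steps suffice. *)
Definition complete' (X A : {set T}) : {set T} :=
  iter #|T| (fun Y => match choose' Y A with Some y => Y :|: [set y] | None => Y end) X.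

Fixpoint canon_from (S : {set T}) (fuel : nat) (s : seq T) : seq T :=
  match fuel with
  | 0 => s
  | k.+1 => match choose' [set x in s] S with
            | Some y => canon_from S k (rcons s y)
            | None => s
            end
  end.

Definition canon (S : {set T}) : seq T :=
  match source S with Some t => canon_from S #|T| [:: t] | None => [::] end.

Definition prefix_set (S : {set T}) (i : nat) : {set T} :=
  [set x in take i (canon S)].

Definition canon_pairs (S : {set T}) : seq (nat * int) :=
  [seq (lay S (head x (canon S)) x, lab x) | x <- canon S].

Fixpoint seq_lt (a b : seq (nat * int)) : bool :=
  match a, b with
  | x :: a', y :: b' => if x == y then seq_lt a' b' else pair_lt x y
  | _, _ => false
  end.

Definition prec' (S T' : {set T}) : bool :=
  (S != T') && seq_lt (canon_pairs S) (canon_pairs T').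

Definition preceq' (S T' : {set T}) : bool := prec' S T' || (S == T').

End SetSystems.

(* Main.v *)
Require Import Defs.
From mathcomp Require Import all_boot all_order all_algebra.
Set Implicit Arguments. Unset Strict Implicit. Unset Printing Implicit Defensive.
Import Order.TTheory GRing.Theory Num.Theory.

Lemma pair_le_refl p : pair_le p p.
Proof. by rewrite /pair_le eqxx lexx orbT. Qed.

Lemma pair_le_total p q : pair_le p q || pair_le q p.
Proof.
rewrite /pair_le; case: (ltngtP p.1 q.1) => //= e.
by rewrite ?e ?eqxx /= le_total.
Qed.

Lemma pair_le_trans p q r : pair_le p q -> pair_le q r -> pair_le p r.
Proof.
rewrite /pair_le => /orP[h1|/andP[/eqP e1 h1]] /orP[h2|/andP[/eqP e2 h2]].
- by rewrite (ltn_trans h1 h2).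
- by rewrite -e2 h1.
- by rewrite e1 h2.
- by rewrite e1 e2 eqxx (le_trans h1 h2) orbT.
Qed.

Lemma pair_le_lt p q : pair_le p q -> p.2 != q.2 -> pair_lt p q.
Proof.
rewrite /pair_le /pair_lt => /orP[->//|/andP[e h]] ne.
by rewrite e lt_neqAle ne h orbT.
Qed.

Lemma pair_le_anti p q : pair_le p q -> pair_le q p -> p.2 = q.2.
Proof.
rewrite /pair_le => /orP[h1|/andP[/eqP e1 h1]] /orP[h2|/andP[/eqP e2 h2]].
- by move: (ltn_trans h1 h2); rewrite ltnn.
- by move: h1; rewrite e2 ltnn.
- by move: h2; rewrite e1 ltnn.
- by apply/eqP; rewrite eq_le h1 h2.
Qed.

Lemma pair_lt_irr p : pair_lt p p = false.
Proof. by rewrite /pair_lt ltnn ltxx andbF. Qed.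

Lemma ex_min (T : finType) (r : rel T) (tot : total r) (tr : transitive r)
  (P : {set T}) : P != set0 -> exists2 y, y \in P & forall z, z \in P -> r y z.
Proof.
move=> /set0Pn [x0 Px0].
move Hn: #|P| => n; elim: n P Hn x0 Px0 => [|n IH] P Hn x0 Px0.
  by move: Hn; rewrite (cardD1 x0) Px0.
case: (boolP (P :\ x0 == set0)) => [/eqP e|ne].
  exists x0 => // z Pz; case: (z =P x0) => [->|nz].
    by case/orP: (tot x0 x0).
  have : z \in P :\ x0 by rewrite !inE Pz andbT; apply/eqP.
  by rewrite e inE.
case/set0Pn: ne => x1 Px1.
have Hc : #|P :\ x0| = n by move: Hn; rewrite (cardsD1 x0 P) Px0 add1n => -[].
have [y Py ymin] := IH (P :\ x0) Hc x1 Px1.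
case/orP: (tot y x0) => h.
  exists y; first by move: Py; rewrite !inE => /andP[].
  move=> z Pz; case: (z =P x0) => [->//|/eqP nz]; apply: ymin; by rewrite !inE nz.
exists x0 => // z Pz; case: (z =P x0) => [->|/eqP nz].
  by case/orP: (tot x0 x0).
apply: tr h _; apply: ymin; by rewrite !inE nz.
Qed.


Lemma seq_ltP (a b : seq (nat * int)) k d : k < size a -> k < size b ->
  take k a = take k b -> pair_lt (nth d a k) (nth d b k) -> seq_lt a b.
Proof.
elim: a b k => [|x a IH] [|y b] [|k] //= ha hb.
  move=> _ h; case: eqP => [e|_ //]; by rewrite e pair_lt_irr in h.
case=> e tk h; rewrite e eqxx; exact: IH ha hb tk h.
Qed.

Lemma common_prefix (X : eqType) (u s : seq X) x0 : exists k,
  [/\ k <= size u, k <= size s, take k u = take k s &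
      [\/ k = size u, k = size s | nth x0 u k != nth x0 s k]].
Proof.
elim: u s => [|x u IH] s; first by exists 0; split; rewrite ?take0 //; exact: Or31.
case: s => [|y s]; first by exists 0; split; rewrite ?take0 //; exact: Or32.
case: (eqVneq x y) => [<-|ne]; last by exists 0; split; rewrite ?take0 //; exact: Or33.
have [k [h1 h2 h3 h4]] := IH s; exists k.+1; split => //=; first by rewrite h3.
by case: h4 => [->|->|h]; [apply: Or31 | apply: Or32 | apply: Or33].
Qed.

Section Main.
Variables (T : finType) (lab : T -> int) (F : {set {set T}}).
Hypotheses (lab_inj : injective lab) (F0 : set0 \in F)
  (hSA : strongly_accessible F) (hC : commutable F).

Local Notation key X y := (layX lab F X y, lab y).

Lemma plusAE (X A : {set T}) a : (a \in plusA F X A) = [&& a \in A, a \notin X & X :|: [set a] \in F].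
Proof. by rewrite /plusA !inE; case: (a \in A); case: (a \in X). Qed.

Lemma chooseP (X A : {set T}) y : choose' lab F X A = Some y ->
  y \in plusA F X A /\ forall z, z \in plusA F X A -> pair_le (key X y) (key X z).
Proof.
rewrite /choose'; case: pickP => [x /andP[Px /forall_inP H] [<-]|//].
by split=> // z Pz; apply: H.
Qed.

Lemma choose_None (X A : {set T}) : choose' lab F X A = None -> plusA F X A = set0.
Proof.
move=> h; apply/eqP; apply/negPn/negP => ne.
have [y Py ymin] := @ex_min _ (fun y z => pair_le (key X y) (key X z))
  (fun y z => pair_le_total _ _) (fun y x z => @pair_le_trans _ _ _) _ ne.
move: h; rewrite /choose'; case: pickP => [x _ //|/(_ y)]; rewrite Py /=.
by move/negbT/negP => H _; apply: H; apply/forall_inP.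
Qed.

Lemma choose_min (X A : {set T}) y : y \in plusA F X A ->
  (forall z, z \in plusA F X A -> pair_le (key X y) (key X z)) ->
  choose' lab F X A = Some y.
Proof.
move=> Py ymin; case E: choose' => [y'|].
  have [Py' y'min] := chooseP E.
  congr Some; apply: lab_inj; apply: pair_le_anti (y'min _ Py) (ymin _ Py').
by move: Py; rewrite (choose_None E) inE.
Qed.

Lemma sourceP (X : {set T}) t : source lab F X = Some t ->
  [/\ t \in X, t \in Zset F & forall y, y \in X -> y \in Zset F -> (lab t <= lab y)%R].
Proof.
rewrite /source; case: pickP => [x|//] /andP[]; rewrite inE => /andP[xX xZ] /forall_inP H [<-].
by split=> // y yX yZ; apply: H; rewrite inE yX.
Qed.

Lemma source_sub (W X : {set T}) t : source lab F W = Some t -> t \in X -> X \subset W ->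
  source lab F X = Some t.
Proof.
move=> /sourceP[tW tZ tmin] tX XW; rewrite /source; case: pickP => [x|].
  move=> /andP[]; rewrite inE => /andP[xX xZ] /forall_inP H.
  congr Some; apply: lab_inj; apply/eqP; rewrite eq_le (tmin x (subsetP XW x xX) xZ) andbT.
  by apply: H; rewrite inE tX.
move/(_ t); rewrite inE tX tZ /=; move/negbT/negP; case; apply/forall_inP => y.
by rewrite inE => /andP[yX yZ]; apply: tmin => //; apply: (subsetP XW).
Qed.

Lemma source_exists (W : {set T}) : W \in F -> W != set0 -> exists t, source lab F W = Some t.
Proof.
move=> WF Wne.
have [z [zW zF]] := hSA F0 WF (etrans (proper0 W) Wne).
have : W :&: Zset F != set0.
  apply/set0Pn; exists z; move: zW; rewrite !inE => /andP[_ ->]; by rewrite set0U in zF.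
move=> ne.
have [y Py ymin] := @ex_min _ (fun y z => (lab y <= lab z)%R)
  (fun y z => le_total _ _) (fun y x z => @le_trans _ _ _ _ _) _ ne.
rewrite /source; case: pickP => [x _|]; first by exists x.
move/(_ y); rewrite Py /=; move/negbT/negP; case; apply/forall_inP => w; exact: ymin.
Qed.

Lemma mono (W B B' : {set T}) a : W \in F -> B \in F -> B' \in F -> B != set0 ->
  B \subset B' -> B' \subset W -> a \in W -> a \notin B' ->
  B :|: [set a] \in F -> B' :|: [set a] \in F.
Proof.
move=> WF; move Hn : #|B' :\: B| => n.
elim: n B Hn => [|n IH] B Hn BF B'F Bne BB' B'W aW aB' BaF.
  have e : B = B'.
    apply/eqP; rewrite eqEsubset BB' /= -setD_eq0; apply/eqP; exact: cards0_eq.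
  by rewrite -e.
have prBB' : B \proper B'.
  rewrite properEneq BB' andbT; apply/eqP => e; move: Hn; by rewrite e setDv cards0.
have [z [zD BzF]] := hSA BF B'F prBB'.
have aB : a \notin B by apply: contra aB'; apply: (subsetP BB').
have zB' : z \in B' by move: zD; rewrite inE => /andP[].
have zB : z \notin B by move: zD; rewrite inE => /andP[].
have prBW : B \proper W.
  rewrite properE (subset_trans BB' B'W) /=; apply/subsetPn; exists a => //.
have := hC BF WF Bne prBW (a:=a) (b:=z).
rewrite !inE aB zB aW (subsetP B'W z zB') /= => /(_ isT isT BaF BzF) H.
apply: (IH (B :|: [set z])) => //.
- move: Hn; rewrite -setDDl (cardsD1 z (B' :\: B)) zD add1n => -[] <-.
  congr #|_|; apply/setP => x; rewrite !inE; by case: (x == z).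
- by apply/set0Pn; exists z; rewrite !inE eqxx orbT.
- by rewrite subUset BB' sub1set.
- have -> : B :|: [set z] :|: [set a] = B :|: [set a; z]; last by [].
  apply/setP => x; rewrite !inE; by case: (x == a); case: (x == z); rewrite ?orbT ?orbF.
Qed.


Lemma layerS (X : {set T}) t m :
  layer F X t m.+1 = layer F X t m :|: (plusA F (layer F X t m) setT :&: X).
Proof. by []. Qed.

Lemma layer0 (X : {set T}) t : layer F X t 0 = [set t].
Proof. by []. Qed.

Lemma layer_mono (X : {set T}) t m m' : m <= m' -> layer F X t m \subset layer F X t m'.
Proof.
elim: m' => [|m' IH]; first by rewrite leqn0 => /eqP ->.
rewrite leq_eqVlt => /orP[/eqP->//|]; rewrite ltnS => h; rewrite layerS.
exact: subset_trans (IH h) (subsetUl _ _).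
Qed.

Lemma layer_t (X : {set T}) t m : t \in layer F X t m.
Proof. by apply: (subsetP (layer_mono X t (leq0n m))); rewrite layer0 set11. Qed.

Lemma layer_sub (X : {set T}) t m : t \in X -> layer F X t m \subset X.
Proof.
move=> tX; elim: m => [|m IH]; first by rewrite layer0 sub1set.
by rewrite layerS subUset IH subsetIr.
Qed.

Lemma addD (W B D : {set T}) : W \in F -> B \in F -> B != set0 -> B \subset W ->
  D \subset W -> (forall d, d \in D -> B :|: [set d] \in F) -> B :|: D \in F.
Proof.
move=> WF BF Bne BW; move Hn : #|D| => n; elim: n D Hn => [|n IH] D Hn DW Hd.
  by rewrite (cards0_eq Hn) setU0.
have : D != set0 by apply/eqP => e; move: Hn; rewrite e cards0.
case/set0Pn => d dD.
have HD' : #|D :\ d| = n by move: Hn; rewrite (cardsD1 d D) dD add1n => -[].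
have IH' := IH (D :\ d) HD' (subset_trans (subsetDl _ _) DW)
  (fun x xD => Hd x (subsetP (subsetDl _ _) x xD)).
have eD : D = (D :\ d) :|: [set d].
  apply/setP => x; rewrite !inE; case: (eqVneq x d) => [->|nx] /=; by rewrite ?dD ?orbT ?orbF.
case: (boolP (d \in B)) => dB.
  rewrite eD setUA; have -> : B :|: (D :\ d) :|: [set d] = B :|: (D :\ d); last by [].
  apply/setP => x; rewrite !inE; case: (eqVneq x d) => [->|nx] /=; by rewrite ?dB ?orbT ?orbF.
rewrite eD setUA; apply: (mono (W:=W) (B:=B)) => //.
- by rewrite subsetUl.
- by rewrite subUset BW (subset_trans (subsetDl _ _) DW).
- exact: (subsetP DW).
- by rewrite !inE eqxx /= orbF.
- exact: Hd.
Qed.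

Lemma layer_F (X : {set T}) t m : X \in F -> t \in X -> [set t] \in F -> layer F X t m \in F.
Proof.
move=> XF tX tF; elim: m => [|m IH]; first by rewrite layer0.
rewrite layerS; apply: (addD (W:=X)) => //.
- by apply/set0Pn; exists t; exact: layer_t.
- exact: layer_sub.
- exact: subsetIr.
- by move=> d; rewrite inE plusAE => /andP[/and3P[_ _ ->]].
Qed.

Local Notation N := #|T|.

Lemma lay_bound (X : {set T}) t y : lay F X t y <= N.+2.
Proof.
rewrite /lay; case: (y == t) => //; rewrite ltnS.
by apply: leq_trans (find_size _ _) _; rewrite size_iota.
Qed.

Lemma lay_t (X : {set T}) t : lay F X t t = 0.
Proof. by rewrite /lay eqxx. Qed.

Lemma lay_neq (X : {set T}) t y : y != t ->
  lay F X t y = (find (fun i => y \in plusA F (layer F X t i) setT) (iota 0 N.+1)).+1.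
Proof. by rewrite /lay => /negbTE ->. Qed.

Lemma lay_le (X : {set T}) t y m : y != t -> m <= N ->
  y \in plusA F (layer F X t m) setT -> lay F X t y <= m.+1.
Proof.
move=> ny mN yP; rewrite lay_neq // ltnS leqNgt; apply/negP => h.
have := before_find 0 h; rewrite nth_iota ?ltnS // add0n yP //.
Qed.

Lemma lay_plus (X : {set T}) t y : y != t -> lay F X t y <= N.+1 ->
  y \in plusA F (layer F X t (lay F X t y).-1) setT.
Proof.
move=> ny; rewrite lay_neq // ltnS /= => h.
have hs : find (fun i => y \in plusA F (layer F X t i) setT) (iota 0 N.+1) < size (iota 0 N.+1).
  by rewrite size_iota ltnS.
have := nth_find 0 (etrans (has_find _ _) hs); rewrite nth_iota ?add0n //; by move: hs; rewrite size_iota.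
Qed.

Lemma lay_layer (X : {set T}) t x m : x \in layer F X t m -> x != t -> m <= N.+1 ->
  lay F X t x <= m.
Proof.
elim: m => [|m IH]; first by rewrite layer0 inE => /eqP ->; rewrite eqxx.
rewrite layerS inE => /orP[h|]; first by move=> nx lm; apply: leq_trans (IH h nx (ltnW lm)) _.
by rewrite inE => /andP[h _] nx lm; apply: lay_le.
Qed.

Lemma layer_agree (W X : {set T}) t i m : layer F W t i \subset X -> X \subset W ->
  m <= i -> layer F X t m = layer F W t m.
Proof.
move=> WX XW; elim: m => [|m IH] lt //.
rewrite !layerS (IH (ltnW lt)); congr (_ :|: _); apply/setP => x; rewrite !in_setI.
case: (boolP (x \in plusA F (layer F W t m) setT)) => //= xP.
have xXW : (x \in X) = (x \in W).
  apply/idP/idP => h; first exact: (subsetP XW).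
  apply: (subsetP WX); apply: (subsetP (layer_mono W t lt)).
  by rewrite layerS inE; apply/orP; right; rewrite inE xP.
by rewrite xXW.
Qed.

Lemma find_agree (s : seq nat) (p q : pred nat) :
  (forall i, i \in take (find p s).+1 s -> p i = q i) -> find q s = find p s.
Proof.
elim: s => [//|a s IH] /= H.
have Ha : p a = q a by apply: H; rewrite inE eqxx.
rewrite -Ha; case E: (p a) => //; congr S; apply: IH => i hi; apply: H.
by rewrite E /= inE hi orbT.
Qed.

Lemma lay_agree (W X : {set T}) t y : y != t ->
  layer F W t (lay F W t y).-1 \subset X -> X \subset W -> lay F X t y = lay F W t y.
Proof.
move=> ny WX XW; rewrite !lay_neq //; congr S; apply: find_agree => i.
rewrite take_iota mem_iota add0n => /andP[_ hi].
have hi' : i <= (lay F W t y).-1.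
  by rewrite lay_neq //= -ltnS; apply: leq_trans hi (geq_minl _ _).
by rewrite (layer_agree WX XW hi').
Qed.

Lemma pair_le_fst (p q : nat * int) : pair_le p q -> p.1 <= q.1.
Proof. by rewrite /pair_le => /orP[/ltnW//|/andP[/eqP-> _]]. Qed.

Lemma layX_src (X : {set T}) t y : source lab F X = Some t -> layX lab F X y = lay F X t y.
Proof. by rewrite /layX => ->. Qed.

Lemma cp (W X : {set T}) t y : W \in F -> X \in F -> t \in X -> X \subset W ->
  source lab F X = Some t -> [set t] \in F -> choose' lab F X W = Some y ->
  lay F X t y = lay F W t y.
Proof.
move=> WF XF tX XW srcX tF hy.
have [yP ymin] := chooseP hy.
move: (yP); rewrite plusAE => /and3P[yW yX _].
have ny : y != t by apply: contra yX => /eqP ->.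
have ly1 : 0 < lay F W t y by rewrite lay_neq.
apply: lay_agree => //.
apply/negPn/negP => /subsetPn [x xL xX].
have xW : x \in W := subsetP (layer_sub _ (subsetP XW t tX)) x xL.
have nx : x != t by apply: contra xX => /eqP ->.
have lx : lay F W t x <= (lay F W t y).-1.
  apply: lay_layer xL nx _; rewrite -ltnS prednK //; exact: lay_bound.
have xD : x \in W :\: X by rewrite inE xX xW.
case: (arg_minnP (lay F W t) xD) => xs xsD xsmin.
set m := lay F W t xs.
have mx : m <= lay F W t x := xsmin x xD.
move/setDP: xsD => [xsW xsX].
have nxs : xs != t by apply: contra xsX => /eqP ->.
have m1 : 0 < m by rewrite /m lay_neq.
have mN : m <= N.+1.
  apply: leq_trans mx (leq_trans lx _); rewrite -ltnS prednK //; exact: lay_bound.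
have xsP := lay_plus nxs mN.
have LX : layer F W t m.-1 \subset X.
  apply/subsetP => z zL; case: (z =P t) => [->//|/eqP nz].
  apply/negPn/negP => zX.
  have zW : z \in W := subsetP (layer_sub _ (subsetP XW t tX)) z zL.
  have lz : lay F W t z <= m.-1 by apply: lay_layer zL nz _; apply: leq_trans (leq_pred _) mN.
  have h : m <= lay F W t z by apply: xsmin; apply/setDP; split.
  by move: (leq_trans h lz); rewrite leqNgt ltn_predL m1.
have xsPX : xs \in plusA F X W.
  rewrite plusAE xsW xsX /=.
  apply: (mono (W:=W) (B:=layer F W t m.-1)) => //.
  - apply: layer_F => //; exact: (subsetP XW).
  - by apply/set0Pn; exists t; exact: layer_t.
  - by move: xsP; rewrite plusAE => /and3P[].
have agr : forall k, k <= m.-1 -> layer F X t k = layer F W t k.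
  by move=> k hk; apply: (layer_agree LX XW hk).
have lxs : lay F X t xs <= m.
  rewrite -(prednK m1); apply: lay_le => //.
    by rewrite -ltnS prednK.
  by rewrite agr.
have lyX : lay F X t y <= m.
  apply: leq_trans lxs; have := pair_le_fst (ymin xs xsPX).
  by rewrite /= !(layX_src _ srcX).
have ly1X : 0 < lay F X t y by rewrite lay_neq.
have yPX := lay_plus ny (leq_trans lyX mN).
rewrite agr in yPX; last by rewrite -!subn1 leq_sub2r.
have := lay_le ny _ yPX; rewrite prednK //.
have -> : (lay F X t y).-1 <= N by rewrite -ltnS prednK // (leq_trans lyX mN).
move=> /(_ isT) h.
have := leq_trans h (leq_trans lyX (leq_trans mx lx)).
by rewrite -{1}(prednK ly1) ltnn.
Qed.

Definition good (W : {set T}) (s : seq T) : Prop :=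
  [/\ uniq s, 0 < size s, {subset s <= W},
      (forall k, 0 < k <= size s -> [set x in take k s] \in F) &
      (forall k x0, 0 < k < size s -> choose' lab F [set x in take k s] W = Some (nth x0 s k))].

Lemma set_take_nth (c : seq T) k x0 : k < size c ->
  [set x in take k.+1 c] = [set x in take k c] :|: [set nth x0 c k].
Proof. by move=> h; rewrite (take_nth x0 h); apply/setP => x; rewrite !inE mem_rcons inE orbC. Qed.

Lemma nth_notin_take (c : seq T) k x0 : uniq c -> k < size c -> nth x0 c k \notin take k c.
Proof. by move=> u h; apply/negP => /index_ltn; rewrite index_uniq // ltnn. Qed.

Lemma canon_from_good (W : {set T}) fuel s : W \in F -> good W s -> #|W| <= size s + fuel ->
  [/\ good W (canon_from lab F W fuel s), [set x in canon_from lab F W fuel s] = W &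
      exists r, canon_from lab F W fuel s = s ++ r].
Proof.
move=> WF; elim: fuel s => [|fuel IH] s [us ss sW sF sC] hf.
  have e : [set x in s] = W.
    apply/eqP; rewrite eqEcard; apply/andP; split.
      by apply/subsetP => x; rewrite inE; apply: sW.
    by rewrite cardsE (card_uniqP us) -(addn0 (size s)).
  by split => //; exists [::]; rewrite cats0.
rewrite /=; case E: choose' => [y|].
  have [yP _] := chooseP E; move: yP; rewrite plusAE => /and3P[yW yX yF].
  have ys : y \notin s by move: yX; rewrite inE.
  have G : good W (rcons s y).
    split.
    + by rewrite rcons_uniq ys us.
    + by rewrite size_rcons.
    + by move=> x; rewrite mem_rcons inE => /orP[/eqP->//|]; apply: sW.
    + move=> k /andP[k0 kl]; move: kl; rewrite size_rcons leq_eqVlt => /orP[/eqP->|kl].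
        rewrite -cats1 take_oversize ?size_cat ?addn1 //.
        have -> : [set x in s ++ [:: y]] = [set x in s] :|: [set y]; last by [].
        by apply/setP => x; rewrite !inE mem_cat inE.
      have kl' : k <= size s by rewrite -ltnS.
      by rewrite -cats1 takel_cat //; apply: sF; rewrite k0 kl'.
    + move=> k x0 /andP[k0 kl]; move: kl; rewrite size_rcons ltnS leq_eqVlt => /orP[/eqP->|kl].
        by rewrite -cats1 take_size_cat // nth_cat ltnn subnn.
      rewrite -cats1 takel_cat; last exact: ltnW.
      by rewrite nth_cat kl; apply: sC; rewrite k0.
  have H : #|W| <= size (rcons s y) + fuel by rewrite size_rcons addSnnS.
  have [g e [r er]] := IH (rcons s y) G H.
  split => //; exists (y :: r); by rewrite er cat_rcons.
move/choose_None: E => P0.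
have sfull : [set x in s] = W.
  apply/eqP; rewrite eqEsubset; apply/andP; split.
    by apply/subsetP => x; rewrite inE; apply: sW.
  apply/negPn/negP => nsub.
  have prp : [set x in s] \proper W.
    by rewrite properE nsub andbT; apply/subsetP => x; rewrite inE; apply: sW.
  have sF' : [set x in s] \in F by rewrite -{1}(take_size s); apply: sF; rewrite ss leqnn.
  have [z [zD zF]] := hSA sF' WF prp.
  move: zD; rewrite inE => /andP[zs zW].
  have : z \in plusA F [set x in s] W by rewrite plusAE zW zs zF.
  by rewrite P0 inE.
by split => //; exists [::]; rewrite cats0.
Qed.

Lemma canon_props (W : {set T}) t : W \in F -> source lab F W = Some t ->
  [/\ good W (canon lab F W), [set x in canon lab F W] = W, size (canon lab F W) = #|W| &
      exists r, canon lab F W = t :: r].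
Proof.
move=> WF srcW; have [tW tZ _] := sourceP srcW.
have g0 : good W [:: t].
  split => //.
  - by move=> x; rewrite inE => /eqP->.
  - move=> k /andP[k0 k1]; have -> : k = 1 by apply/eqP; rewrite eqn_leq k1.
    have -> : [set x in take 1 [:: t]] = [set t]; last by move: tZ; rewrite inE.
    by apply/setP => x; rewrite !inE.
  - by move=> k x0 /andP[k0 k1]; move: k1; rewrite /= ltnNge k0.
have [g e [r er]] := @canon_from_good W #|T| [:: t] WF g0 (leq_trans (max_card _) (leqnSn _)).
rewrite /canon srcW; split => //.
- case: g => u _ _ _ _; have := congr1 (fun A : {set T} => #|A|) e.
  by rewrite /= cardsE (card_uniqP u).
- by exists r.
Qed.

Lemma lay_canon (W : {set T}) t c i x0 : W \in F -> source lab F W = Some t -> good W c ->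
  [set x in c] = W -> nth x0 c 0 = t -> 0 < i < size c ->
  lay F W t (nth x0 c i) = lay F [set x in take i c] t (nth x0 c i).
Proof.
move=> WF srcW [uc sc cW cF cC] e h0 /andP[i0 il].
have [tW tZ _] := sourceP srcW.
have ti : t \in [set x in take i c].
  by rewrite inE -h0 -(nth_take x0 i0) mem_nth // size_takel // ltnW.
have sub : [set x in take i c] \subset W.
  by apply/subsetP => x; rewrite inE => /mem_take; apply: cW.
symmetry; apply: cp => //.
- by apply: cF; rewrite i0 ltnW.
- exact: source_sub srcW ti sub.
- by move: tZ; rewrite inE.
- by apply: cC; rewrite i0.
Qed.

Local Notation fC := (fun Y => match choose' lab F Y setT with Some y => Y :|: [set y] | None => Y end).

Lemma fC_sub (Y : {set T}) : Y \subset fC Y.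
Proof.
cbv beta.
by match goal with |- context [choose' ?a ?b ?c ?d] => destruct (choose' a b c d) as [y|] end;
  [apply: subsetUl | apply: subxx].
Qed.

Lemma iter_mono n n' (X : {set T}) : n <= n' -> iter n fC X \subset iter n' fC X.
Proof.
elim: n' => [|n' IH]; first by rewrite leqn0 => /eqP ->.
rewrite leq_eqVlt => /orP[/eqP->//|]; rewrite ltnS => h.
exact: subset_trans (IH h) (fC_sub _).
Qed.

Lemma iter_inv n (X : {set T}) : X \in F ->
  iter n fC X \in F /\ (#|X| + n <= #|iter n fC X| \/ plusA F (iter n fC X) setT = set0).
Proof.
move=> XF; elim: n => [|n [IF IH]]; first by rewrite addn0 /=; split => //; left.
rewrite iterS; set Y := iter n fC X in IF IH *.
cbv beta; match goal with |- context [choose' ?a ?b ?c ?d] => case E: (choose' a b c d) => [y|] end.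
  have [yP _] := chooseP E; move: (yP); rewrite plusAE => /and3P[_ yY yF].
  split => //; case: IH => [h|h]; last by move: yP; rewrite h inE.
  left; rewrite setUC cardsU1 yY addnS add1n ltnS; exact: h.
by split => //; right; apply: choose_None.
Qed.

Lemma complete_max (X : {set T}) : X \in F -> X != set0 ->
  maximal F (complete' lab F X setT) /\ plusA F (complete' lab F X setT) setT = set0.
Proof.
move=> XF Xne; have [CF h] := @iter_inv #|T| X XF.
have pe : plusA F (complete' lab F X setT) setT = set0.
  case: h => // h; exfalso.
  have : 0 < #|X| by rewrite card_gt0.
  move=> h0; move: (leq_trans h (max_card _)); rewrite -{2}(add0n #|T|) leq_add2r leqn0.
  by move/eqP => e; rewrite e in h0.
split => //; split => // Y YF prY.
have [z [zD zF]] := hSA CF YF prY.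
move: zD; rewrite inE => /andP[zC _].
have : z \in plusA F (complete' lab F X setT) setT.
  by rewrite plusAE in_setT /=; apply/andP; split; [exact: zC | exact: zF].
by rewrite pe inE.
Qed.

Lemma complete_canon (P0 : {set T}) c j :
  let Tc := complete' lab F P0 setT in
  good Tc c -> size c <= #|T| -> 0 < j -> [set x in take j c] = P0 ->
  forall x0 r, j <= r < size c -> choose' lab F [set x in take r c] setT = Some (nth x0 c r).
Proof.
move=> Tc [uc sc cW cF cC] scN j0 ePj x0.
have step : forall n, j + n < size c -> iter n fC P0 = [set x in take (j + n) c] ->
    choose' lab F [set x in take (j + n) c] setT = Some (nth x0 c (j + n)).
  move=> n hn eX.
  have cCn : choose' lab F [set x in take (j + n) c] Tc = Some (nth x0 c (j + n)).
    by apply: cC; rewrite hn andbT addn_gt0 j0.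
  have [vP _] := chooseP cCn.
  case E: (choose' lab F [set x in take (j + n) c] [set: T]) => [y|].
    have [yP ymin] := chooseP E.
    have yT : y \in Tc.
      apply: (subsetP (@iter_mono n.+1 #|T| P0 _)).
        by apply: leq_trans scN; apply: leq_trans hn; rewrite ltnS leq_addl.
      by rewrite iterS eX E !inE eqxx orbT.
    have yPT : y \in plusA F [set x in take (j + n) c] Tc.
      by move: yP; rewrite !plusAE yT => /and3P[_ -> ->].
    have : choose' lab F [set x in take (j + n) c] Tc = Some y.
      apply: choose_min => // z zP; apply: ymin.
      by move: zP; rewrite !plusAE in_setT => /and3P[_ -> ->].
    by rewrite cCn.
  move/choose_None: E => E.
  have : nth x0 c (j + n) \in plusA F [set x in take (j + n) c] setT.
    by move: vP; rewrite !plusAE in_setT => /and3P[_ -> ->].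
  by rewrite E inE.
have iterE : forall n, j + n <= size c -> iter n fC P0 = [set x in take (j + n) c].
  elim => [|n IH] hn; first by rewrite addn0.
  have hn' : j + n < size c by rewrite -addnS.
  rewrite iterS (IH (ltnW hn')); cbv beta.
  rewrite (step n hn' (IH (ltnW hn'))).
  by rewrite addnS (set_take_nth x0 hn').
move=> r /andP[jr rc].
have e : r = j + (r - j) by rewrite subnKC.
rewrite e; apply: step; first by rewrite -e.
by apply: iterE; rewrite -e ltnW.
Qed.

Lemma main_sec (S : {set T}) (hS : maximal F S) (hSne : S != set0)
  (j : nat) (hj1 : (1 <= j)%N) (hj2 : (j <= #|S|)%N) :
  maximal F (complete' lab F (prefix_set lab F S j) setT) /\
  preceq' lab F (complete' lab F (prefix_set lab F S j) setT) S.
Proof.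
case: (hS) => SF Smax.
have [t srcS] := source_exists SF hSne.
have [tS tZ tmin] := sourceP srcS.
have tF : [set t] \in F by move: tZ; rewrite inE.
have [gS setS sizeS [rS eS]] := canon_props SF srcS.
set cS := canon lab F S in gS setS sizeS eS.
case: (gS) => uS sS cSS cSF cSC.
set P0 := prefix_set lab F S j.
have eP0 : P0 = [set x in take j cS] by [].
have P0F : P0 \in F by rewrite eP0; apply: cSF; rewrite hj1 sizeS.
have tP0 : t \in P0 by rewrite eP0 inE eS; case: (j) hj1 => [//|n _]; rewrite /= inE eqxx.
have P0ne : P0 != set0 by apply/set0Pn; exists t.
have [Tc eTc] : exists Tc, complete' lab F P0 setT = Tc by eexists.
have [TcMax plusTc] := complete_max P0F P0ne.
rewrite eTc in TcMax plusTc *.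
case: (TcMax) => TcF TcM.
have P0Tc : P0 \subset Tc by rewrite -eTc; apply: (@iter_mono 0 #|T| P0).
have Tcne : Tc != set0 by apply/set0Pn; exists t; exact: (subsetP P0Tc).
have [t' srcT] := source_exists TcF Tcne.
have [t'T t'Z t'min] := sourceP srcT.
have [gT setT' sizeT [rT eT]] := canon_props TcF srcT.
set cT := canon lab F Tc in gT setT' sizeT eT.
case: (gT) => uT sT cTS cTF cTC.
split => //.
rewrite /preceq'; case: (eqVneq Tc S) => [->|ne]; first by apply/orP; right.
apply/orP; left; rewrite /prec' ne /=.
have pT : canon_pairs lab F Tc = [seq (lay F Tc t' x, lab x) | x <- cT].
  by rewrite /canon_pairs -/cT eT.
have pS : canon_pairs lab F S = [seq (lay F S t x, lab x) | x <- cS].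
  by rewrite /canon_pairs -/cS eS.
rewrite pT pS.
have [k [ku ks tk hk]] := common_prefix cT cS t.
have nT : k != size cT.
  apply/eqP => e; have sub : Tc \subset S.
    apply/subsetP => x; rewrite -setT' inE -{1}(take_size cT) -e tk => /mem_take.
    by rewrite -setS inE.
  apply: (TcM S SF); by rewrite properEneq ne sub.
have nS : k != size cS.
  apply/eqP => e; have sub : S \subset Tc.
    apply/subsetP => x; rewrite -setS inE -{1}(take_size cS) -e -tk => /mem_take.
    by rewrite -setT' inE.
  apply: (Smax Tc TcF); by rewrite properEneq eq_sym ne sub.
have kT : k < size cT by rewrite ltn_neqAle nT ku.
have kS : k < size cS by rewrite ltn_neqAle nS ks.
have hne : nth t cT k != nth t cS k.
  by case: hk => [e|e|//]; [move: nT | move: nS]; rewrite e eqxx.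

have XS : forall i, [set x in take i cS] \subset S.
  by move=> i; apply/subsetP => x; rewrite inE => /mem_take; rewrite -setS inE.
have XT : forall i, i <= k -> take i cT = take i cS.
  by move=> i ik; rewrite -(take_takel cT ik) tk take_takel.
have nthT : forall i, i < k -> nth t cT i = nth t cS i.
  by move=> i ik; rewrite -(nth_take t ik) tk nth_take.
have hS0 : nth t cS 0 = t by rewrite eS.
case: (posnP k) => [k0|k0].
  apply: (@seq_ltP _ _ k (0, 0%R)); rewrite ?size_map //; first by rewrite k0 !take0.
  rewrite !(nth_map t) //; move: hne; rewrite k0 eT eS /= !lay_t => hne.
  rewrite /pair_lt /= ?eqxx /= lt_neqAle.
  rewrite (t'min t (subsetP P0Tc t tP0) tZ) andbT.
  by apply: contra hne => /eqP /lab_inj ->.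
have t't : t' = t by rewrite -hS0 -nthT // eT.
rewrite t't in eT srcT *.
have h0T : nth t cT 0 = t by rewrite eT.
apply: (@seq_ltP _ _ k (0, 0%R)); rewrite ?size_map //.
  rewrite -!map_take tk; apply/eq_in_map => x xk.
  have xS : x \in cS := mem_take xk.
  have ik := index_ltn xk.
  have ex : x = nth t cS (index x cS) by rewrite nth_index.
  case: (posnP (index x cS)) => [i0|i0].
    by rewrite ex i0 hS0 !lay_t.
  have ex' : x = nth t cT (index x cS) by rewrite nthT.
  congr (_, _).
  rewrite {1}ex' {2}ex.
  rewrite (lay_canon TcF srcT gT setT' h0T); last by rewrite i0 (ltn_trans ik kT).
  rewrite (lay_canon SF srcS gS setS hS0); last by rewrite i0 (ltn_trans ik kS).
  by rewrite (XT _ (ltnW ik)) -ex -ex'.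
rewrite !(nth_map t) //.
set u := nth t cT k; set v := nth t cS k.
set X := [set x in take k cS].
have tX : t \in X by rewrite inE -hS0 -(nth_take t k0) mem_nth // size_takel // ltnW.
have srcX : source lab F X = Some t := source_sub srcS tX (XS k).
rewrite (lay_canon TcF srcT gT setT' h0T); last by rewrite k0 kT.
rewrite (lay_canon SF srcS gS setS hS0); last by rewrite k0 kS.
rewrite XT // -/X -/u -/v.
apply: pair_le_lt; last by apply/eqP => /lab_inj e; move: hne; rewrite -/u -/v e eqxx.
rewrite -!(layX_src _ srcX).
have vP : forall A : {set T}, v \in A -> v \in plusA F X A.
  move=> A vA; rewrite plusAE vA /= inE nth_notin_take //=.
  by rewrite -(set_take_nth t kS); apply: cSF; rewrite kS.
case: (ltnP k j) => kj.
  have cu : choose' lab F X Tc = Some u.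
    by rewrite /X -XT //; apply: cTC; rewrite k0.
  have [_ umin] := chooseP cu; apply: umin; apply: vP.
  apply: (subsetP P0Tc); rewrite eP0 inE /v -(nth_take t kj) mem_nth // size_takel //.
  by rewrite sizeS.
have cu : choose' lab F X setT = Some u.
  rewrite /X -XT //; have := @complete_canon P0 cT j; rewrite /= eTc.
  move=> /(_ gT); apply => //.
  - by rewrite sizeT max_card.
  - by rewrite -(take_takel cT kj) tk take_takel.
  - by rewrite kj kT.
have [_ umin] := chooseP cu; apply: umin; apply: vP; exact: in_setT.
Qed.

End Main.

Theorem mainTheorem7 (T : finType) (lab : T -> int) (F : {set {set T}})
  (lab_inj : injective lab) (F0 : set0 \in F)
  (hSA : strongly_accessible F) (hC : commutable F)
  (S : {set T}) (hS : maximal F S) (hSne : S != set0)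
  (j : nat) (hj1 : (1 <= j)%N) (hj2 : (j <= #|S|)%N) :
  maximal F (complete' lab F (prefix_set lab F S j) setT) /\
  preceq' lab F (complete' lab F (prefix_set lab F S j) setT) S.
Proof. exact: (main_sec lab_inj F0 hSA hC hS hSne hj1 hj2). Qed.
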